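(* Let $E: y^2=x^3+Ax+B$ be an elliptic curve over $\mathbb{Q}(2^\infty)$ with $j(E)\in\mathbb{Q}\setminus\{0,1728\}$, and let $E'$ be as in the context. If $E(\mathbb{Q}(2^\infty))[2]\neq\{\mathcal{O}\}$, then $E(\mathbb{Q}(2^\infty))[2]=E[2]$ and $E'(\mathbb{Q})[2]\neq\{\mathcal{O}\}$.
   Context: $\mathbb{Q}(2^\infty)=\mathbb{Q}(\{\sqrt{m}: m\in\mathbb{Z}\})$ is the compositum of all quadratic extensions of $\mathbb{Q}$ in $\mathbb{C}$. With $j=j(E)$, $E'$ is the elliptic curve over $\mathbb{Q}$ given by $y^2=x^3-\frac{27j}{j-1728}x+\frac{54j}{j-1728}$ (a quadratic twist of $E$ with the same $j$-invariant). *)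

(* Defs.v *)
(* everything lives in algC, the algebraic closure of Q
   (algebraic complex numbers), which contains Q(2^oo). *)
From mathcomp Require Import all_boot all_order all_algebra all_field.
Set Implicit Arguments. Unset Strict Implicit. Unset Printing Implicit Defensive.
Import Order.TTheory GRing.Theory Num.Theory.
Local Open Scope ring_scope.

(* Q(2^oo) = Q({sqrt m : m in Z}): the smallest subfield of algC containing
   a square root of every integer m. *)
Inductive Q2inf : algC -> Prop :=
  | Q2inf_sqrt (m : int) : Q2inf (sqrtC (m%:~R))
  | Q2inf_1 : Q2inf 1
  | Q2inf_add x y : Q2inf x -> Q2inf y -> Q2inf (x + y)
  | Q2inf_opp x : Q2inf x -> Q2inf (- x)
  | Q2inf_mul x y : Q2inf x -> Q2inf y -> Q2inf (x * y)
  | Q2inf_inv x : Q2inf x -> Q2inf (x^-1).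

Definition isQ (x : algC) : Prop := x \in Crat.

(* Projective points of a short Weierstrass curve: None is the point at
   infinity O, Some (x, y) an affine point. *)
Definition point := option (algC * algC).

Definition on_curve (A B : algC) (P : point) : Prop :=
  match P with
  | None => True
  | Some (x, y) => y ^+ 2 = x ^+ 3 + A * x + B
  end.

Definition negp (P : point) : point :=
  match P with None => None | Some (x, y) => Some (x, - y) end.

(* P is in E[2] (over algC = algebraic closure): P on E and 2P = O,
   i.e. P + P = O, i.e. P = -P. *)
Definition tors2 (A B : algC) (P : point) : Prop :=
  on_curve A B P /\ negp P = P.

Definition rational_over (K : algC -> Prop) (P : point) : Prop :=
  match P with None => True | Some (x, y) => K x /\ K y end.

Definition disc_nz (A B : algC) : Prop := 4 * A ^+ 3 + 27 * B ^+ 2 != 0.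

Definition jinv (A B : algC) : algC :=
  1728 * (4 * A ^+ 3) / (4 * A ^+ 3 + 27 * B ^+ 2).

Definition twistA (j : algC) : algC := - (27 * j / (j - 1728)).
Definition twistB (j : algC) : algC := 54 * j / (j - 1728).

(* Main.v *)
Require Import Defs.
From mathcomp Require Import all_boot all_order all_algebra all_field.
From mathcomp Require Import ring.
From Stdlib Require Import Classical.
Import Order.TTheory GRing.Theory Num.Theory.
Local Open Scope ring_scope.

Record isfield (K : algC -> Prop) : Prop := IsField {
  f_rat : forall x, x \in Crat -> K x;
  f_add : forall x y, K x -> K y -> K (x + y);
  f_opp : forall x, K x -> K (- x);
  f_mul : forall x y, K x -> K y -> K (x * y);
  f_inv : forall x, K x -> K (x^-1) }.
Arguments f_rat {K}. Arguments f_add {K}. Arguments f_opp {K}.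
Arguments f_mul {K}. Arguments f_inv {K}.

Ltac kt F := repeat first
  [ assumption
  | apply: (f_add F) | apply: (f_mul F) | apply: (f_opp F) | apply: (f_inv F)
  | (apply: (f_rat F); by rewrite ?rpred_nat ?rpred_int ?rpred0 ?rpred1) ].

Definition ext2 (K : algC -> Prop) (c x : algC) : Prop :=
  exists a b, K a /\ K b /\ x = a + b * c.

Lemma ext2_sub K c x : isfield K -> K x -> ext2 K c x.
Proof.
move=> F Kx; exists x, 0; split=> //; split; first by kt F.
by rewrite mul0r addr0.
Qed.

Lemma ext2_mono (K K' : algC -> Prop) c x :
  (forall y, K y -> K' y) -> ext2 K c x -> ext2 K' c x.
Proof. by move=> H [a [b [Ka [Kb ->]]]]; exists a, b; split; [|split]; auto. Qed.

Lemma ext2_field K c : isfield K -> K (c ^+ 2) -> isfield (ext2 K c).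
Proof.
move=> F Kc.
split.
- by move=> x /(f_rat F) Kx; apply: ext2_sub.
- move=> x y [a [b [Ka [Kb ->]]]] [a' [b' [Ka' [Kb' ->]]]].
  exists (a + a'), (b + b'); split; [kt F|split; [kt F|ring]].
- move=> x [a [b [Ka [Kb ->]]]].
  exists (- a), (- b); split; [kt F|split; [kt F|ring]].
- move=> x y [a [b [Ka [Kb ->]]]] [a' [b' [Ka' [Kb' ->]]]].
  exists (a * a' + b * b' * c ^+ 2), (a * b' + a' * b); split; [kt F|split; [kt F|ring]].
- move=> x [a [b [Ka [Kb ->]]]].
  set N := a * a - b * b * c ^+ 2.
  have KN : K N by rewrite /N; kt F.
  case: (eqVneq N 0) => [N0|Nn0].
  + case: (eqVneq b 0) => [b0|bn0].
    * have a0 : a = 0.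
        by apply/eqP; rewrite -sqrf_eq0; apply/eqP; rewrite -N0 /N b0; ring.
      rewrite a0 b0 mul0r addr0 invr0; apply: ext2_sub => //; kt F.
    * have : (a / b) ^+ 2 == c ^+ 2.
        apply/eqP; apply: (mulfI (expf_neq0 2 bn0)).
        rewrite -exprMn mulrC divfK //; apply/eqP; rewrite -subr_eq0; apply/eqP.
        by rewrite -N0 /N; ring.
      rewrite eqf_sqr => /orP[] /eqP h.
        by rewrite -h; apply: ext2_sub => //; kt F.
      have -> : c = - (a / b) by rewrite h opprK.
      by apply: ext2_sub => //; kt F.
  + exists (a / N), (- b / N); split; [kt F|split; [kt F|]].
    have xn : (a + b * c) * (a - b * c) = N by rewrite /N; ring.
    have -> : a / N + - b / N * c = (a - b * c) / N by ring.
    apply: mulr1_eq; by rewrite mulrA xn divff.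
Qed.

Definition cub (c2 c1 c0 x : algC) := x ^+ 3 + c2 * x ^+ 2 + c1 * x + c0.

Lemma cub_ext K c c2 c1 c0 : isfield K -> K (c ^+ 2) -> K c2 -> K c1 -> K c0 ->
  forall x, ext2 K c x -> cub c2 c1 c0 x = 0 -> exists y, K y /\ cub c2 c1 c0 y = 0.
Proof.
move=> F Kc K2 K1 K0 x [a [b [Ka [Kb xE]]]] hx.
case: (classic (K c)) => Kcc.
  by exists x; split => //; rewrite xE; kt F.
set P0 := a * a * a + 3 * a * (b * b) * c ^+ 2 + c2 * (a * a + b * b * c ^+ 2) + c1 * a + c0.
set P1 := 3 * a * a * b + b * b * b * c ^+ 2 + 2 * c2 * a * b + c1 * b.
have KP0 : K P0 by rewrite /P0; kt F.
have KP1 : K P1 by rewrite /P1; kt F.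
have e1 : cub c2 c1 c0 (a + b * c) = P0 + c * P1 by rewrite /cub /P0 /P1; ring.
have e2 : cub c2 c1 c0 (a - b * c) = P0 - c * P1 by rewrite /cub /P0 /P1; ring.
have P10 : P1 = 0.
  case: (eqVneq P1 0) => // P1n0; exfalso; apply: Kcc.
  have -> : c = - P0 / P1.
    have h0 : P0 + c * P1 = 0 by rewrite -e1 -xE.
    apply: (mulIf P1n0); rewrite divfK //; apply/eqP.
    by rewrite -addr_eq0 addrC h0.
  kt F.
have P00 : P0 = 0 by move: hx; rewrite xE e1 P10 mulr0 addr0.
case: (eqVneq b 0) => [b0|bn0].
  by exists a; split => //; rewrite -hx xE b0 mul0r addr0.
have cn0 : c != 0 by apply/eqP => cz; apply: Kcc; rewrite cz; kt F.
set x1 := a + b * c. set x2 := a - b * c.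
have h1 : cub c2 c1 c0 x1 = 0 by rewrite e1 P00 P10 mulr0 addr0.
have h2 : cub c2 c1 c0 x2 = 0 by rewrite /x2 e2 P00 P10 mulr0 subr0.
set Q := x1 * x1 + x1 * x2 + x2 * x2 + c2 * (x1 + x2) + c1.
have dQ : (x2 - x1) * Q = cub c2 c1 c0 x2 - cub c2 c1 c0 x1 by rewrite /Q /cub; ring.
have x12 : x2 - x1 != 0.
  have -> : x2 - x1 = - (2 * b * c) by rewrite /x1 /x2; ring.
  by rewrite oppr_eq0 !mulf_neq0 // pnatr_eq0.
have Q0 : Q = 0.
  by apply/eqP; move: dQ; rewrite h1 h2 subr0 => /eqP; rewrite mulf_eq0 (negPf x12).
exists (- c2 - a - a); split; first by kt F.
have -> : - c2 - a - a = - c2 - x1 - x2 by rewrite /x1 /x2; ring.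
have -> : cub c2 c1 c0 (- c2 - x1 - x2) = cub c2 c1 c0 x1 + (- c2 - x1 - x2 - x1) * Q.
  by rewrite /cub /Q; ring.
by rewrite h1 Q0 mulr0 addr0.
Qed.

Fixpoint towerK (K : algC -> Prop) (ms : seq int) : algC -> Prop :=
  match ms with
  | [::] => K
  | m :: ms' => ext2 (towerK K ms') (sqrtC (m%:~R))
  end.

Lemma towerK_field K ms : isfield K -> isfield (towerK K ms).
Proof.
move=> F; elim: ms => //= m ms IH; apply: ext2_field => //.
by rewrite sqrtCK; apply: (f_rat IH); rewrite rpred_int.
Qed.

Lemma towerK_cat K ns ms : towerK K (ns ++ ms) = towerK (towerK K ms) ns.
Proof. by elim: ns => //= n ns ->. Qed.

Lemma towerK_mono (K K' : algC -> Prop) ns x :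
  (forall y, K y -> K' y) -> towerK K ns x -> towerK K' ns x.
Proof.
elim: ns x => //= [x H|n ns IH x H]; first exact: H.
by apply: ext2_mono => y; apply: IH.
Qed.

Lemma towerK_incl K ns x : isfield K -> K x -> towerK K ns x.
Proof.
move=> F; elim: ns x => //= n ns IH x Kx; apply: ext2_sub; last exact: IH.
exact: towerK_field.
Qed.

Lemma cub_tower K ms c2 c1 c0 : isfield K -> K c2 -> K c1 -> K c0 ->
  forall x, towerK K ms x -> cub c2 c1 c0 x = 0 -> exists y, K y /\ cub c2 c1 c0 y = 0.
Proof.
move=> F K2 K1 K0; elim: ms => [|m ms IH] x /= Kx hx; first by exists x.
have F' := towerK_field K ms F.
have [y [Ky hy]] := cub_ext _ (sqrtC m%:~R) _ _ _ F'
   ltac:(by rewrite sqrtCK; apply: (f_rat F'); rewrite rpred_int)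
   (towerK_incl _ _ _ F K2) (towerK_incl _ _ _ F K1) (towerK_incl _ _ _ F K0) _ Kx hx.
exact: IH Ky hy.
Qed.

Lemma Crat_field : isfield (fun x => x \in Crat).
Proof.
split => //; by move=> *; rewrite ?rpredD ?rpredN ?rpredM ?rpredV.
Qed.

Lemma Q2inf_nat n : Q2inf n%:R.
Proof.
elim: n => [|n IH]; last by rewrite mulrS; apply: Q2inf_add => //; apply: Q2inf_1.
by rewrite mulr0n -(addrN (1:algC)); apply: Q2inf_add; [apply: Q2inf_1 | apply: Q2inf_opp; apply: Q2inf_1].
Qed.

Lemma Q2inf_int (z : int) : Q2inf z%:~R.
Proof.
case: z => n; first by rewrite -pmulrn; apply: Q2inf_nat.
by rewrite NegzE mulrNz; apply: Q2inf_opp; rewrite -pmulrn; apply: Q2inf_nat.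
Qed.

Lemma Q2inf_field : isfield Q2inf.
Proof.
split; try by constructor.
move=> x /CratP [q ->]; rewrite -[q]divq_num_den fmorph_div !rmorph_int.
by apply: Q2inf_mul; [|apply: Q2inf_inv]; apply: Q2inf_int.
Qed.

Lemma Q2inf_tower x : Q2inf x -> exists ms, towerK (fun y => y \in Crat) ms x.
Proof.
have CF := Crat_field.
have merge : forall ms ns y z, towerK (fun y => y \in Crat) ms y ->
    towerK (fun y => y \in Crat) ns z ->
    towerK (fun y => y \in Crat) (ns ++ ms) y /\ towerK (fun y => y \in Crat) (ns ++ ms) z.
  move=> ms ns y z Hy Hz; rewrite towerK_cat; split.
    by apply: towerK_incl => //; apply: towerK_field.
  by apply: towerK_mono Hz => w; apply: towerK_incl.
elim=> [m| |y z _ [ms Hy] _ [ns Hz]|y _ [ms Hy]|y z _ [ms Hy] _ [ns Hz]|y _ [ms Hy]].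
- exists [:: m]; exists 0, 1; split; first exact: rpred0.
  by split; [exact: rpred1 | rewrite mul1r add0r].
- by exists [::]; exact: rpred1.
- have [H1 H2] := merge _ _ _ _ Hy Hz; exists (ns ++ ms).
  exact: (f_add (towerK_field _ (ns ++ ms) CF)).
- by exists ms; apply: (f_opp (towerK_field _ ms CF)).
- have [H1 H2] := merge _ _ _ _ Hy Hz; exists (ns ++ ms).
  exact: (f_mul (towerK_field _ (ns ++ ms) CF)).
- by exists ms; apply: (f_inv (towerK_field _ ms CF)).
Qed.

Lemma twist_eqs (A B : algC) : 4 * A ^+ 3 + 27 * B ^+ 2 != 0 -> A != 0 -> B != 0 ->
  twistA (jinv A B) = 4 * A ^+ 3 / B ^+ 2 /\ twistB (jinv A B) = - (8 * A ^+ 3 / B ^+ 2).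
Proof.
move=> D0 A0 B0.
have jm : jinv A B - 1728 = - (1728 * 27 * B ^+ 2) / (4 * A ^+ 3 + 27 * B ^+ 2).
  by rewrite /jinv; field.
have jn : jinv A B - 1728 != 0.
  by rewrite jm mulf_neq0 ?oppr_eq0 ?invr_eq0 // !mulf_neq0 ?expf_neq0 // pnatr_eq0.
rewrite /twistA /twistB; split.
  apply: (mulIf jn); rewrite mulNr divfK // jm /jinv. field.
  by rewrite D0 B0.
apply: (mulIf jn); rewrite divfK // jm /jinv. field.
by rewrite D0 B0.
Qed.

Lemma tors2_pt (A B : algC) x y : tors2 A B (Some (x, y)) -> y = 0 /\ x ^+ 3 + A * x + B = 0.
Proof.
move=> [hc h]; case: h => hy.
have y0 : y = 0.
  have : y *+ 2 == 0 by rewrite mulr2n -{1}hy addNr.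
  by rewrite mulrn_eq0 /= => /eqP.
split => //; move: hc; rewrite /= y0 => <-; ring.
Qed.

Theorem lemma5p6 (A B : algC)
  (hA : Q2inf A) (hB : Q2inf B) (hdisc : disc_nz A B)
  (hjQ : isQ (jinv A B)) (hj0 : jinv A B != 0) (hj1728 : jinv A B != 1728)
  (h2 : exists P : point, P <> None /\ tors2 A B P /\ rational_over Q2inf P) :
  (forall P : point, tors2 A B P -> rational_over Q2inf P) /\
  (exists P : point, P <> None /\
     tors2 (twistA (jinv A B)) (twistB (jinv A B)) P /\ rational_over isQ P).
Proof.
have QF := Q2inf_field.
move: hdisc hjQ; rewrite /disc_nz /isQ => hdisc hjQ.
have A0 : A != 0.
  apply/eqP => A0; move/eqP: hj0; apply; rewrite /jinv A0; ring.
have B0 : B != 0.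
  apply/eqP => B0; move/eqP: hj1728; apply; move: hdisc; rewrite /jinv B0 => hd.
  have e : 4 * A ^+ 3 + 27 * 0 ^+ 2 = 4 * A ^+ 3 :> algC by ring.
  by rewrite e in hd *; rewrite mulfK.
have [hA' hB'] := twist_eqs A B hdisc A0 B0.
have QA' : twistA (jinv A B) \in Crat.
  by move: (jinv A B) hjQ => j hj; rewrite /twistA rpredN rpred_div ?rpredM ?rpredB ?rpred_nat.
have QB' : twistB (jinv A B) \in Crat.
  by move: (jinv A B) hjQ => j hj; rewrite /twistB rpred_div ?rpredM ?rpredB ?rpred_nat.
move: QA' QB' hA' hB'.
set A' := twistA (jinv A B); set B' := twistB (jinv A B) => QA' QB' hA' hB'.
set lam := - (2 * A) / B.
have Hlam : Q2inf lam by rewrite /lam; kt QF.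
have lam0 : lam != 0 by rewrite /lam mulf_neq0 ?invr_eq0 ?oppr_eq0 ?mulf_neq0 // pnatr_eq0.
have scale : forall x, cub 0 A' B' (lam * x) = lam ^+ 3 * (x ^+ 3 + A * x + B).
  by move=> x; rewrite /cub hA' hB' /lam; field.
have [[[e y]|] [Pn [tP rP]]] := h2; last by [].
have [y0 he] := tors2_pt _ _ _ _ tP.
case: rP => He _.
have [ms hms] := Q2inf_tower _ (f_mul QF _ _ Hlam He).
have [r [Qr hr]] := cub_tower _ ms 0 A' B' Crat_field (rpred0 _) QA' QB' _ hms
   ltac:(by rewrite scale he mulr0).
have Qr' : Q2inf r by apply: (f_rat QF).
have hr' : r ^+ 3 + A' * r + B' = 0 by rewrite -hr /cub; ring.
split; last first.
  exists (Some (r, 0)); split => //; split; last by split => //; apply: rpred0.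
  by split; [rewrite /= hr'; ring | rewrite /= oppr0].
move=> [[x y']|] // tP'.
have [-> hx] := tors2_pt _ _ _ _ tP'.
split; last by kt QF.
set t := lam * x.
have ht : cub 0 A' B' t = 0 by rewrite /t scale hx mulr0.
have : (t - r) * (t * t + r * t + A' + r * r) = 0.
  have <- : cub 0 A' B' t - cub 0 A' B' r = (t - r) * (t * t + r * t + A' + r * r).
    by rewrite /cub; ring.
  by rewrite ht hr subr0.
move/eqP; rewrite mulf_eq0 => /orP[/eqP tr|/eqP q0].
  have -> : x = t / lam by rewrite /t; field; rewrite lam0.
  have -> : t = r by apply/eqP; rewrite -subr_eq0 tr.
  kt QF.
set D := - (3 * r * r) - 4 * A'.
have QD : D \in Crat by rewrite /D rpredB ?rpredN ?rpredM ?rpred_nat.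
have hd : (2 * t + r) ^+ 2 = D.
  apply/eqP; rewrite -subr_eq0; apply/eqP.
  have -> : (2 * t + r) ^+ 2 - D = 4 * (t * t + r * t + A' + r * r) by rewrite /D; ring.
  by rewrite q0 mulr0.
case/CratP: QD => q hq.
have hD : D = (numq q)%:~R / (denq q)%:~R.
  by rewrite hq -[in LHS](divq_num_den q) fmorph_div !rmorph_int.
have d0 : (denq q)%:~R != 0 :> algC by rewrite intr_eq0 denq_neq0.
set w := sqrtC ((numq q * denq q)%:~R : algC).
have Hw : Q2inf w := Q2inf_sqrt _.
have : ((denq q)%:~R * (2 * t + r)) ^+ 2 == w ^+ 2.
  apply/eqP; rewrite exprMn hd hD sqrtCK intrM; field.
  by rewrite d0.
have key : forall s, Q2inf s -> (denq q)%:~R * (2 * t + r) = s -> Q2inf x.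
  move=> s Hs E.
  have -> : x = (s / (denq q)%:~R - r) / (2 * lam).
    rewrite -E /t; field.
    by rewrite lam0 /=; exact: d0.
  kt QF.
rewrite eqf_sqr => /orP[] /eqP E; apply: (key _ _ E); kt QF.
Qed.
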